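(* Consider one step of the perturbed FEAST iteration with $p<n$ and $m\le p$. Suppose $$Q_{k-1}=[\,(X_m+X_p'E_{k-1}+X_m'F_{k-1})L_{k-1}^{-1}\;\;V_{k-1}\,]\,U_{k-1}$$ where: - $U_{k-1}$ ($p\times p$) and $L_{k-1}$ ($m\times m$) are invertible; - $E_{k-1}$ is $(n-p)\times m$, $F_{k-1}$ is $(n-m)\times m$, and $V_{k-1}$ is $n\times(p-m)$. Define $\xi_{k-1}$ ($m\times m$), $\zeta_{k-1}$ ($(n-m)\times m$) and $\psi_{k-1}$ ($n\times(p-m)$) by $$X^{-1}\Delta_{k-1}U_{k-1}^{-1}\begin{bmatrix}L_{k-1}&0\\0&I_{p-m}\end{bmatrix}=\begin{bmatrix}\xi_{k-1}&\\ \zeta_{k-1}&\psi_{k-1}\end{bmatrix},$$ i.e. the first $m$ columns are $\begin{bmatrix}\xi_{k-1}\\ \zeta_{k-1}\end{bmatrix}$ and the last $p-m$ columns are $\psi_{k-1}$. If $\Gamma_m+\xi_{k-1}$ is invertible and $Y_k=\rho(M)Q_{k-1}+\Delta_{k-1}$ has full column rank, then $$Q_k=[\,(X_m+X_p'E_k+X_m'F_k)L_k^{-1}\;\;V_k\,]\,U_k$$ for some unitary $U_k$ and some $n\times(p-m)$ matrix $V_k$. Here: - $L_k$ satisfies $L_k^*L_k=(X_m+X_p'E_k+X_m'F_k)^*B(X_m+X_p'E_k+X_m'F_k)$; - $\|L_k\|\le(1+(\|E_k\|+\|F_k\|)^2)^{1/2}$; - $E_k=\Gamma_p'E_{k-1}(\Gamma_m+\xi_{k-1})^{-1}$;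 - $F_k=\Gamma_m'F_{k-1}(\Gamma_m+\xi_{k-1})^{-1}+\zeta_{k-1}(\Gamma_m+\xi_{k-1})^{-1}$.
   Context: Standing setup. - $A,B$ are Hermitian $n\times n$ matrices, $B$ positive definite, $B=C^*C$ with $C$ invertible. - $X=[x_1,\dots,x_n]$ satisfies $X^*BX=I$ and $AX=BX\Lambda$, with $\Lambda$ real diagonal; $M=B^{-1}A$. - $\rho$ is the Gauss–Legendre rational filter for an interval $[\lambda_-,\lambda_+]$: with $c,r$ its center and radius, $\phi_k=c+re^{\iota\frac\pi2(1+t_k)}$ and $\omega_k=w_k\frac{\iota\pi r}{2}e^{\iota\frac\pi2(1+t_k)}/(2\pi\iota)$ for the $q$-point Gauss–Legendre pairs $(w_k,t_k)$, define $\rho(\mu)=\sum_k\big(\frac{\omega_k}{\phi_k-\mu}+\frac{\overline{\omega_k}}{\overline{\phi_k}-\mu}\big)$. - $\rho(M)=\sum_k(\omega_k(\phi_kI-M)^{-1}+\overline{\omega_k}(\overline{\phi_k}I-M)^{-1})=X\rho(\Lambda)X^{-1}$. - $\gamma_j=\rho(\lambda_j)$ (real), with eigenpairs numbered so that $|\gamma_1|\ge\cdots\ge|\gamma_n|$. Block notation: $X_\ell=[x_1,\dots,x_\ell]$, $X_\ell'=[x_{\ell+1},\dots,x_n]$, $\Gamma_\ell=\mathrm{diag}(\gamma_1,\dots,\gamma_\ell)$, $\Gamma_\ell'=\mathrm{diag}(\gamma_{\ell+1},\dots,\gamma_n)$. $\|\cdot\|$ is the spectral norm. Perturbed FEAST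 step: $Y_k=\rho(M)Q_{k-1}+\Delta_{k-1}$ for an $n\times p$ error matrix $\Delta_{k-1}$; $\widehat A_k=Y_k^*AY_k$, $\widehat B_k=Y_k^*BY_k$; $\widehat A_k\widehat X_k=\widehat B_k\widehat X_k\widehat\Lambda_k$ with $\widehat\Lambda_k$ diagonal and $\widehat X_k^*\widehat B_k\widehat X_k=I_p$; $Q_k=Y_k\widehat X_k$. *)

(* Defs.v *)
From HB Require Import structures.
From mathcomp Require Import all_boot all_order all_algebra.
From Stdlib Require Import ClassicalEpsilon.
Set Implicit Arguments. Unset Strict Implicit. Unset Printing Implicit Defensive.
Import Order.TTheory GRing.Theory Num.Theory.
Local Open Scope ring_scope.
Local Open Scope sesquilinear_scope.

Section Defs.
Variable C : numClosedFieldType.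

Definition adj m n (A : 'M[C]_(m, n)) : 'M[C]_(n, m) := A ^t*.

Definition vnorm2 n (x : 'cV[C]_n) : C := \sum_i `|x i 0| ^+ 2.

Definition is_specnorm m n (A : 'M[C]_(m, n)) (s : C) : Prop :=
  [/\ 0 <= s,
      (forall x : 'cV[C]_n, vnorm2 (A *m x) <= s ^+ 2 * vnorm2 x) &
      (forall t : C, 0 <= t ->
         (forall x : 'cV[C]_n, vnorm2 (A *m x) <= t ^+ 2 * vnorm2 x) -> s <= t)].

(* the spectral norm ||A|| (it exists and is unique) *)
Definition specnorm m n (A : 'M[C]_(m, n)) : C :=
  epsilon (inhabits 0) (is_specnorm A).

(* the rk x ck submatrix of A whose top-left entry is A r0 c0 (0-based);
   entries outside A are 0 (never used when the block fits). *)
Definition subblk r c (r0 c0 rk ck : nat) (A : 'M[C]_(r, c)) : 'M[C]_(rk, ck) :=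
  \matrix_(i < rk, j < ck)
     (match insub (r0 + i), insub (c0 + j) with
      | Some i', Some j' => A i' j'
      | _, _ => 0 end).

(* diagonal block diag(g_(off+1), ..., g_(off+k)) (0-based offset) *)
Definition diagblk n (off k : nat) (g : 'I_n -> C) : 'M[C]_k :=
  diag_mx (\row_(j < k) (if insub (off + j) is Some j' then g j' else 0)).

Definition rho q (phi om : 'I_q -> C) (mu : C) : C :=
  \sum_(k < q) (om k / (phi k - mu) + (om k)^* / ((phi k)^* - mu)).

Definition rhoM q n (phi om : 'I_q -> C) (M : 'M[C]_n) : 'M[C]_n :=
  \sum_(k < q) (om k *: invmx (phi k *: 1%:M - M)
                + (om k)^* *: invmx ((phi k)^* *: 1%:M - M)).

End Defs.

(* Main.v *)
Require Import Defs.
From HB Require Import structures.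
From mathcomp Require Import all_boot all_order all_algebra.
From Stdlib Require Import ClassicalEpsilon.
From mathcomp Require Import ring.
Import Order.TTheory GRing.Theory Num.Theory.
Local Open Scope ring_scope.
Local Open Scope sesquilinear_scope.

Definition sel {C : numClosedFieldType} (N c0 k : nat) : 'M[C]_(N, k) :=
  \matrix_(i < N, j < k) ((i == (c0 + j)%N :> nat)%:R).

Lemma sum_sel (C : numClosedFieldType) N k (f : 'I_N -> C) :
  \sum_(a < N) ((a == k :> nat)%:R * f a) = if insub k is Some a then f a else 0.
Proof.
case: insubP => [a _ <-|].
  rewrite (bigD1 a) //= eqxx mul1r big1 ?addr0 // => b /negPf.
  by rewrite -val_eqE /= => ->; rewrite mul0r.
move=> hk; rewrite big1 // => b _.
case: eqP => [e|]; last by rewrite mul0r.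
by move: hk; rewrite -e ltn_ord.
Qed.

Lemma subblkE (C : numClosedFieldType) r c r0 c0 rk ck (A : 'M[C]_(r, c)) :
  subblk r0 c0 rk ck A = (sel r r0 rk)^T *m A *m sel c c0 ck.
Proof.
apply/matrixP => i j; rewrite !mxE.
under eq_bigr do rewrite !mxE mulrC.
rewrite sum_sel.
case Ec: (insub (c0 + j)%N : option 'I_c) => [b|]; last first.
  by case: (insub (r0 + i)%N : option 'I_r).
under eq_bigr do rewrite !mxE.
rewrite sum_sel.
by case: (insub (r0 + i)%N : option 'I_r).
Qed.

Lemma diag_sel (C : numClosedFieldType) N off k (g : 'I_N -> C) :
  diag_mx (\row_i g i) *m sel N off k = sel N off k *m diagblk off k g.
Proof.
rewrite /diagblk mul_diag_mx mul_mx_diag; apply/matrixP => i j; rewrite !mxE.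
case: eqP => [e|]; last by rewrite mulr0 mul0r.
have hlt : ((off + j)%R < N)%N by rewrite -[(off + j)%R]/(off + j)%N -e ltn_ord.
by rewrite insubT /= mulr1 mul1r; congr g; apply/val_inj.
Qed.

Lemma selTsel (C : numClosedFieldType) N a k b l :
  (sel N a k)^T *m sel N b l =
  \matrix_(i, j) (((a + i == b + j)%N && (a + i < N)%N)%:R : C).
Proof.
apply/matrixP => i j; rewrite !mxE.
under eq_bigr do rewrite !mxE.
rewrite sum_sel; case: insubP => [c _ ec|hc].
  by rewrite -ec ltn_ord andbT.
by rewrite (negPf hc) andbF.
Qed.

Lemma selTsel1 (C : numClosedFieldType) N a k :
  (a + k <= N)%N -> (sel N a k)^T *m sel N a k = 1%:M :> 'M[C]_k.
Proof.
move=> h; rewrite selTsel; apply/matrixP => i j; rewrite !mxE eqn_add2l.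
have -> : (a + i < N)%N by apply: leq_trans h; rewrite ltn_add2l.
by rewrite andbT.
Qed.

Lemma selTsel0 (C : numClosedFieldType) N a k b l :
  (a + k <= b)%N -> (sel N a k)^T *m sel N b l = 0 :> 'M[C]_(k, l).
Proof.
move=> h; rewrite selTsel; apply/matrixP => i j; rewrite !mxE.
suff -> : (a + i == b + j)%N = false by [].
apply/negbTE; rewrite neq_ltn; apply/orP; left.
by apply: (leq_trans _ (leq_addr j b)); apply: leq_trans h; rewrite ltn_add2l.
Qed.

Lemma selselT (C : numClosedFieldType) N c0 k :
  sel N c0 k *m (sel N c0 k)^T =
  \matrix_(i, j) (((i == j) && (c0 <= i < c0 + k)%N)%:R : C).
Proof.
apply/matrixP => i j; rewrite !mxE.
under eq_bigr do rewrite !mxE.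
case: (boolP ((c0 <= i < c0 + k)%N)) => [/andP[h1 h2]|hi].
  have h : (i - c0 < k)%N by rewrite ltn_subLR.
  rewrite (bigD1 (Ordinal h)) //= subnKC // eqxx mul1r andbT big1 ?addr0.
    by rewrite eq_sym.
  move=> a; rewrite -val_eqE /= => ha.
  case: eqP => [e|]; last by rewrite mul0r.
  by move: ha; rewrite e addKn eqxx.
rewrite andbF big1 // => a _.
case: eqP => [e|]; last by rewrite mul0r.
by move: hi; rewrite e leq_addr ltn_add2l ltn_ord.
Qed.

Lemma sel_split (C : numClosedFieldType) N m :
  (m <= N)%N ->
  sel N 0 m *m (sel N 0 m)^T + sel N m (N - m) *m (sel N m (N - m))^T
  = 1%:M :> 'M[C]_N.
Proof.
move=> h; rewrite !selselT; apply/matrixP => i j; rewrite !mxE subnKC //.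
rewrite ltn_ord andbT leq0n /=.
case: eqP => _ /=; last by rewrite addr0.
by case: (ltnP i m) => _ /=; rewrite ?addr0 ?add0r.
Qed.

Lemma sel_id (C : numClosedFieldType) N : sel N 0 N = 1%:M :> 'M[C]_N.
Proof. by apply/matrixP => i j; rewrite !mxE. Qed.

Lemma sel_col (C : numClosedFieldType) m r :
  sel (m + r) 0 m = col_mx 1%:M 0 :> 'M[C]_(m + r, m).
Proof.
apply/matrixP => i j; rewrite !mxE; case: splitP => k ek; rewrite !mxE ek //.
by rewrite eqn_leq leqNgt (leq_trans (ltn_ord j) (leq_addr k m)).
Qed.

Lemma Q0e (C : numClosedFieldType) n m r p (hp : (m + r)%N = p)
  (P : 'M[C]_(n, m)) (V : 'M_(n, r)) (L : 'M_m) :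
  castmx (erefl n, hp) (row_mx P V) *m castmx (hp, hp) (block_mx L 0 0 1%:M)
  *m sel p 0 m = P *m L.
Proof.
case: p / hp; rewrite !castmx_id mul_row_block sel_col mul_row_col.
by rewrite !mulmx0 addr0 mulmx1 addr0.
Qed.

Lemma cast_unitary (C : numClosedFieldType) a p (hp : a = p) (K : 'M[C]_(a, p)) :
  K \is unitarymx -> castmx (hp, erefl) K \is unitarymx.
Proof. by case: p / hp in K *; rewrite castmx_id. Qed.

Lemma cast_decomp (C : numClosedFieldType) n a p (hp : a = p)
  (K : 'M[C]_(a, p)) (Q : 'M[C]_(n, p)) :
  K \is unitarymx -> Q = castmx (erefl n, hp) (Q *m K^t*) *m castmx (hp, erefl) K.
Proof.
case: p / hp in K Q *; rewrite !castmx_id => /unitarymxP /mulmx1C h.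
by rewrite -mulmxA h mulmx1.
Qed.

Local Notation "B ^!" :=
  (orthomx Num.Def.conjC (mx_of_hermitian (hermitian1mx _)) B) : matrix_set_scope.

Lemma complete_unitary (C : numClosedFieldType) m p r (Sr : 'M[C]_(m, p)) :
  Sr \is unitarymx -> (m + r)%N = p ->
  exists Sd : 'M[C]_(r, p), col_mx Sr Sd \is unitarymx.
Proof.
move=> Su hmr.
have hr : \rank (Sr^!)%MS = r by rewrite rank_ortho (mxrank_unitary Su) -hmr addKn.
case: r / hr in hmr *.
exists (schmidt (row_base (Sr^!)%MS)).
apply/unitarymxP; rewrite tr_col_mx map_row_mx mul_col_row.
rewrite (unitarymxP Su) (unitarymxP (schmidt_unitarymx _ _)) ?rank_leq_col //.
have nS : Sr *m (schmidt (row_base (Sr^!)%MS))^t* = 0.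
  apply/orthomx1P.
  apply: (submx_trans (_ : (Sr <= Sr^!^!)%MS)); first by rewrite ortho_id.
  by rewrite submx_ortho eqmx_schmidt_free ?row_base_free // eq_row_base.
have nS' := congr1 (fun M => M^t*) nS; move: nS' => /=.
rewrite trmx_mul map_mxM trmxCK trmx0 (map_mx0 Num.Def.conjC) => nS'.
by rewrite nS nS' -scalar_mx_block.
Qed.

Lemma vnorm2E (C : numClosedFieldType) n (x : 'cV[C]_n) : vnorm2 x = (x^t* *m x) 0 0.
Proof. by rewrite /vnorm2 mxE; apply: eq_bigr => i _; rewrite !mxE normCK mulrC. Qed.

Lemma vnorm2_ge0 (C : numClosedFieldType) n (x : 'cV[C]_n) : 0 <= vnorm2 x.
Proof. by apply: sumr_ge0 => i _; rewrite exprn_ge0. Qed.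

Lemma vnorm2_eq0 (C : numClosedFieldType) n (x : 'cV[C]_n) : vnorm2 x = 0 -> x = 0.
Proof.
move=> /eqP; rewrite /vnorm2 psumr_eq0 => [/allP h|i _]; last by rewrite exprn_ge0.
apply/matrixP => i j; rewrite ord1 mxE; have := h i (mem_index_enum i).
by rewrite implyTb expf_eq0 normr_eq0 => /andP[_ /eqP].
Qed.

Lemma unitaryTV (C : numClosedFieldType) n (P : 'M[C]_n) :
  P \is unitarymx -> P^t* *m P = 1%:M.
Proof. by move=> /unitarymxP /mulmx1C. Qed.

Lemma vnorm2_unitary (C : numClosedFieldType) n (P : 'M[C]_n) (x : 'cV[C]_n) :
  P \is unitarymx -> vnorm2 (P *m x) = vnorm2 x.
Proof.
move=> Pu; rewrite !vnorm2E trmx_mul map_mxM -mulmxA (mulmxA _ P).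
by rewrite unitaryTV // mul1mx.
Qed.

Lemma exists_max (C : numClosedFieldType) n (f : 'I_n.+1 -> C) :
  (forall i, f i \is Num.real) -> exists k, forall i, f i <= f k.
Proof.
move=> fr.
suff [k hk] : exists k, forall i, i \in enum 'I_n.+1 -> f i <= f k.
  by exists k => i; apply: hk; rewrite mem_enum.
elim: (enum _) => [|a s [k hk]]; first by exists ord0.
case/orP: (real_leVge (fr a) (fr k)) => h.
  by exists k => i; rewrite inE => /orP[/eqP->//|]; apply: hk.
exists a => i; rewrite inE => /orP[/eqP->//|/hk hi]; exact: le_trans hi h.
Qed.

Lemma quad_diag (C : numClosedFieldType) n (z : 'cV[C]_n) (d : 'rV[C]_n) :
  (z^t* *m diag_mx d *m z) 0 0 = \sum_i d 0 i * `|z i 0| ^+ 2.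
Proof.
rewrite mul_mx_diag !mxE; apply: eq_bigr => i _; rewrite !mxE normCK.
by ring.
Qed.

Lemma vnorm2_delta (C : numClosedFieldType) n (k : 'I_n) :
  vnorm2 (delta_mx k 0 : 'cV[C]_n) = 1.
Proof.
rewrite /vnorm2 (bigD1 k) //= !mxE !eqxx /= normr1 expr1n big1 ?addr0 // => i /negPf.
by rewrite !mxE => ->; rewrite normr0 expr0n.
Qed.

Lemma specnorm_exists (C : numClosedFieldType) m n (A : 'M[C]_(m, n)) :
  exists s, is_specnorm A s.
Proof.
case: n A => [|n] A.
  exists 0; split => // x.
  by rewrite (thinmx0 A) mul0mx vnorm2E mulmx0 mxE expr0n /= !mul0r.
set H := A^t* *m A.
have Hn : H \is normalmx.
  by apply/normalmxP; have -> : H^t* = H by rewrite /H trmx_mul map_mxM trmxCK.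
have /orthomx_spectralP HE := Hn.
move: HE; set P := spectralmx H; set d := spectral_diag H => HE.
have Pu : P \is unitarymx := spectral_unitarymx H.
rewrite invmx_unitary // in HE.
have key : forall x, vnorm2 (A *m x) = ((P *m x)^t* *m diag_mx d *m (P *m x)) 0 0.
  move=> x; rewrite vnorm2E trmx_mul map_mxM -mulmxA (mulmxA (A^t*)) -/H HE.
  by rewrite trmx_mul map_mxM !mulmxA.
have dk : forall k, vnorm2 (A *m (P^t* *m delta_mx k 0)) = d 0 k.
  move=> k; rewrite key (mulmxA P) (unitarymxP Pu) mul1mx quad_diag (bigD1 k) //=.
  rewrite !mxE !eqxx /= normr1 expr1n mulr1 big1 ?addr0 // => i /negPf.
  by rewrite !mxE => ->; rewrite normr0 expr0n mulr0.
have dge0 : forall k, 0 <= d 0 k by move=> k; rewrite -dk vnorm2_ge0.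
have [k hk] := @exists_max _ _ (fun i => d 0 i) (fun i => ger0_real (dge0 i)).
exists (sqrtC (d 0 k)); split.
- by rewrite sqrtC_ge0.
- move=> x; rewrite key quad_diag sqrtCK -(@vnorm2_unitary _ _ P x Pu) /vnorm2 mulr_sumr.
  by apply: ler_sum => i _; apply: ler_wpM2r; [rewrite exprn_ge0|apply: hk].
- move=> t t0 ht; have := ht (P^t* *m delta_mx k 0).
  rewrite dk vnorm2_unitary ?trmxC_unitary // vnorm2_delta mulr1 => hdk.
  by rewrite -(sqrCK t0) ler_sqrtC // qualifE /= ?exprn_ge0.
Qed.

Lemma specnorm_spec (C : numClosedFieldType) m n (A : 'M[C]_(m, n)) :
  is_specnorm A (specnorm A).
Proof. exact: epsilon_spec (@specnorm_exists _ _ _ A). Qed.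

Lemma specnorm_ge0 (C : numClosedFieldType) m n (A : 'M[C]_(m, n)) :
  0 <= specnorm A.
Proof. by case: (@specnorm_spec _ _ _ A). Qed.

Lemma specnorm_ub (C : numClosedFieldType) m n (A : 'M[C]_(m, n)) x :
  vnorm2 (A *m x) <= specnorm A ^+ 2 * vnorm2 x.
Proof. by case: (@specnorm_spec _ _ _ A). Qed.

Lemma specnorm_least (C : numClosedFieldType) m n (A : 'M[C]_(m, n)) t :
  0 <= t -> (forall x, vnorm2 (A *m x) <= t ^+ 2 * vnorm2 x) -> specnorm A <= t.
Proof. by case: (@specnorm_spec _ _ _ A) => _ _; apply. Qed.

Lemma vnorm2_add (C : numClosedFieldType) k (u v : 'cV[C]_k) (a b w : C) :
  0 <= a -> 0 <= b -> 0 <= w ->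
  vnorm2 u <= a ^+ 2 * w -> vnorm2 v <= b ^+ 2 * w ->
  vnorm2 (u + v) <= (a + b) ^+ 2 * w.
Proof.
move=> a0 b0 w0 hu hv.
have [ae|an0] := eqVneq a 0.
  rewrite ae in hu *.
  have u0 : u = 0.
    apply: vnorm2_eq0; apply/le_anti; rewrite vnorm2_ge0 andbT.
    by move: hu; rewrite expr0n mul0r.
  by rewrite u0 add0r add0r.
have [be|bn0] := eqVneq b 0.
  rewrite be in hv *.
  have v0 : v = 0.
    apply: vnorm2_eq0; apply/le_anti; rewrite vnorm2_ge0 andbT.
    by move: hv; rewrite expr0n mul0r.
  by rewrite v0 addr0 addr0.
have ap : 0 < a by rewrite lt_def an0.
have bp : 0 < b by rewrite lt_def bn0.
have ac : a^* = a by apply/CrealP/ger0_real.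
have bc : b^* = b by apply/CrealP/ger0_real.
pose Z i := u i 0 * (v i 0)^* + v i 0 * (u i 0)^*.
pose c := \sum_i Z i.
have e1 : vnorm2 (u + v) = vnorm2 u + vnorm2 v + c.
  rewrite /vnorm2 /c -!big_split /=; apply: eq_bigr => i _.
  rewrite !mxE !normCK rmorphD /Z; ring.
have e2 : vnorm2 (b *: u - a *: v) = b ^+ 2 * vnorm2 u + a ^+ 2 * vnorm2 v - a * b * c.
  rewrite /vnorm2 /c !mulr_sumr -sumrN -!big_split /=; apply: eq_bigr => i _.
  rewrite !mxE !normCK rmorphB !rmorphM /= ac bc /Z; ring.
have h1 : a * b * c <= a * b * (2 * a * b * w).
  have := @vnorm2_ge0 _ _ (b *: u - a *: v); rewrite e2 subr_ge0 => h.
  apply: (le_trans h).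
  have -> : a * b * (2 * a * b * w) = b ^+ 2 * (a ^+ 2 * w) + a ^+ 2 * (b ^+ 2 * w) by ring.
  by apply: lerD; apply: ler_wpM2l; rewrite ?exprn_ge0.
rewrite ler_pM2l ?mulr_gt0 // in h1.
rewrite e1.
have -> : (a + b) ^+ 2 * w = a ^+ 2 * w + b ^+ 2 * w + 2 * a * b * w by ring.
by rewrite !lerD.
Qed.

Lemma inv_eq (C : numClosedFieldType) n (A B : 'M[C]_n) : A *m B = 1%:M -> invmx A = B.
Proof.
move=> h; have [Au _] := mulmx1_unit h.
by rewrite -[invmx A]mulmx1 -h mulmxA mulVmx // mul1mx.
Qed.

Lemma diag_mul (C : numClosedFieldType) n (d e : 'rV[C]_n) :
  diag_mx d *m diag_mx e = diag_mx (\row_j (d 0 j * e 0 j)).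
Proof.
apply/matrixP => i j; rewrite mul_diag_mx !mxE.
by case: eqP => [->|]; rewrite ?mulr1n ?mulr0n ?mulr0.
Qed.

Lemma inv_shift (C : numClosedFieldType) n (X : 'M[C]_n) (lam : 'rV[C]_n) (M : 'M[C]_n) z :
  X \in unitmx -> M = X *m diag_mx lam *m invmx X -> (forall j, z != lam 0 j) ->
  invmx (z *: 1%:M - M) = X *m diag_mx (\row_j (z - lam 0 j)^-1) *m invmx X.
Proof.
move=> Xu -> hz.
have E : z *: 1%:M - X *m diag_mx lam *m invmx X
         = X *m diag_mx (\row_j (z - lam 0 j)) *m invmx X.
  have -> : diag_mx (\row_j (z - lam 0 j)) = z%:M - diag_mx lam.
    by apply/matrixP => i j; rewrite !mxE; case: eqP; rewrite ?mulr1n ?mulr0n ?subr0.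
  by rewrite mulmxBr mulmxBl mul_mx_scalar -scalemxAl mulmxV // scalemx1.
apply: inv_eq; rewrite E !mulmxA mulmxKV // -(mulmxA X) diag_mul.
have -> : diag_mx (\row_j ((\row_j0 (z - lam 0 j0)) 0 j * (\row_j0 (z - lam 0 j0)^-1) 0 j)) = 1%:M :> 'M[C]_n.
  apply/matrixP => i j; rewrite !mxE mulfV ?subr_eq0 //.
by rewrite mulmx1 mulmxV.
Qed.

Lemma rhoM_diag (C : numClosedFieldType) q n (phi om : 'I_q -> C) (X : 'M[C]_n)
  (lam : 'rV[C]_n) (M : 'M[C]_n) :
  X \in unitmx -> M = X *m diag_mx lam *m invmx X ->
  (forall i, lam 0 i \is Num.real) -> (forall k, phi k \notin Num.real) ->
  rhoM phi om M = X *m diag_mx (\row_j rho phi om (lam 0 j)) *m invmx X.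
Proof.
move=> Xu ME lr pr.
have nz : forall k j, phi k != lam 0 j.
  by move=> k j; apply: contraNneq (pr k) => ->.
have nz' : forall k j, (phi k)^* != lam 0 j.
  move=> k j; apply: contraNneq (pr k) => e.
  by rewrite -[phi k]conjCK e (CrealP (lr j)).
pose T (d : 'rV[C]_n) := X *m diag_mx d *m invmx X.
have TZ : forall a d, a *: T d = T (a *: d).
  by move=> a d; rewrite /T linearZ /= -scalemxAr -scalemxAl.
have TD : forall d e, T d + T e = T (d + e).
  by move=> d e; rewrite /T raddfD /= mulmxDr mulmxDl.
rewrite /rhoM.
under eq_bigr do rewrite !(@inv_shift _ _ X lam M _ Xu ME) // -/T !TZ TD.
rewrite -/T.
have -> : \sum_(k < q) T (om k *: \row_j (phi k - lam 0 j)^-1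
                       + (om k)^* *: \row_j ((phi k)^* - lam 0 j)^-1)
          = T (\sum_(k < q) (om k *: \row_j (phi k - lam 0 j)^-1
                       + (om k)^* *: \row_j ((phi k)^* - lam 0 j)^-1)).
  by rewrite /T raddf_sum mulmx_sumr mulmx_suml.
congr T; apply/matrixP => i j; rewrite !mxE summxE /rho.
by apply: eq_bigr => k _; rewrite !mxE.
Qed.

Lemma adjM (C : numClosedFieldType) a b c (A : 'M[C]_(a, b)) (B : 'M[C]_(b, c)) :
  adj (A *m B) = adj B *m adj A.
Proof. by rewrite /adj trmx_mul map_mxM. Qed.

Lemma adjK (C : numClosedFieldType) a b (A : 'M[C]_(a, b)) : adj (adj A) = A.
Proof. exact: trmxCK. Qed.

Lemma adj_unit (C : numClosedFieldType) a (A : 'M[C]_a) : (adj A \in unitmx) = (A \in unitmx).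
Proof. by rewrite /adj map_unitmx unitmx_tr. Qed.

Lemma vnorm2_sel (C : numClosedFieldType) N a k (y : 'cV[C]_k) :
  (a + k <= N)%N -> vnorm2 (sel N a k *m y) = vnorm2 y.
Proof.
move=> h; rewrite !vnorm2E trmx_mul map_mxM -mulmxA (mulmxA _ (sel N a k)).
have -> : (sel N a k : 'M[C]_(N, k))^t* = (sel N a k)^T.
  by apply/matrixP => i j; rewrite !mxE; case: eqP; rewrite ?conjC1 ?conjC0.
by rewrite selTsel1 // mul1mx.
Qed.

Lemma vnorm2_orth (C : numClosedFieldType) k (u v : 'cV[C]_k) :
  u^t* *m v = 0 -> vnorm2 (u + v) = vnorm2 u + vnorm2 v.
Proof.
move=> h.
have h' : v^t* *m u = 0.
  by have := congr1 (fun M => M^t*) h; rewrite /= trmx_mul map_mxM trmxCK trmx0 (map_mx0 Num.Def.conjC).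
have ht : (u + v)^t* = u^t* + v^t* by apply/matrixP => i j; rewrite !mxE rmorphD.
by rewrite !vnorm2E ht mulmxDl !mulmxDr h h' addr0 add0r mxE.
Qed.

Lemma gram_unit (C : numClosedFieldType) n m (W : 'M[C]_(n, m)) (G : 'M[C]_(m, n)) :
  G *m W = 1%:M -> adj W *m W \in unitmx.
Proof.
move=> GW; rewrite -row_free_unit; apply/negPn/negP => nf.
have : kermx (adj W *m W) != 0 by rewrite kermx_eq0.
case/matrix0Pn => i [j nz]; set u := row i (kermx (adj W *m W)).
have uH : u *m (adj W *m W) = 0 by rewrite /u -row_mul mulmx_ker row0.
have : W *m u^t* = 0.
  apply: vnorm2_eq0; rewrite vnorm2E trmx_mul map_mxM trmxCK mulmxA -(mulmxA u).
  by rewrite -/(adj W) uH mul0mx mxE.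
move=> /(congr1 (mulmx G)); rewrite mulmxA GW mul1mx mulmx0 => h.
have u0 : u = 0.
  by have := congr1 (fun M => M^t*) h; rewrite /= trmxCK trmx0 (map_mx0 Num.Def.conjC).
by move: u0 nz; rewrite /u => /rowP /(_ j); rewrite !mxE => ->; rewrite eqxx.
Qed.

Lemma selC (C : numClosedFieldType) N a k :
  (sel N a k : 'M[C]_(N, k))^t* = (sel N a k)^T.
Proof. by apply/matrixP => i j; rewrite !mxE; case: eqP; rewrite ?conjC1 ?conjC0. Qed.

Theorem lemma1 (C : numClosedFieldType) (n p m q : nat)
  (* the pencil (A, B): A Hermitian, B = Cb^* Cb with Cb invertible *)
  (A B Cb : 'M[C]_n)
  (HA : adj A = A) (HCb : Cb \in unitmx) (HB : B = adj Cb *m Cb)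
  (* B-orthonormal eigenvectors X with real eigenvalues lam *)
  (X : 'M[C]_n) (lam : 'rV[C]_n)
  (HXB : adj X *m B *m X = 1%:M)
  (HAX : A *m X = B *m X *m diag_mx lam)
  (Hlam : forall i, lam 0 i \is Num.real)
  (* the rational filter: q nodes phi_k (off the real axis) and weights om_k *)
  (phi om : 'I_q -> C) (Hphi : forall k, phi k \notin Num.real)
  (* eigenpairs numbered so that |gamma_1| >= ... >= |gamma_n| *)
  (Hord : forall i j : 'I_n, (i <= j)%N ->
            `|rho phi om (lam 0 j)| <= `|rho phi om (lam 0 i)|)
  (Hpn : (p < n)%N) (Hmp : (m <= p)%N)
  (* the previous iterate Q_{k-1} *)
  (U0 : 'M[C]_p) (L0 : 'M[C]_m) (E0 : 'M[C]_(n - p, m)) (F0 : 'M[C]_(n - m, m))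
  (V0 : 'M[C]_(n, p - m))
  (HU0 : U0 \in unitmx) (HL0 : L0 \in unitmx)
  (* the error matrix Delta_{k-1} *)
  (Delta : 'M[C]_(n, p))
  (* the Rayleigh-Ritz step *)
  (Xh : 'M[C]_p) (lamh : 'rV[C]_p) :
  let M := invmx B *m A in
  let gam := fun j : 'I_n => rho phi om (lam 0 j) in
  let Gm := diagblk 0 m gam in
  let Gp' := diagblk p (n - p) gam in
  let Gm' := diagblk m (n - m) gam in
  let Xm := subblk 0 0 n m X in
  let Xp' := subblk 0 p n (n - p) X in
  let Xm' := subblk 0 m n (n - m) X in
  let Q0 := castmx (erefl n, subnKC Hmp)
              (row_mx ((Xm + Xp' *m E0 + Xm' *m F0) *m invmx L0) V0) *m U0 in
  let Z := invmx X *m Delta *m invmx U0 *m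
             castmx (subnKC Hmp, subnKC Hmp) (block_mx L0 0 0 1%:M) in
  let xi := subblk 0 0 m m Z in
  let zeta := subblk m 0 (n - m) m Z in
  let Y := rhoM phi om M *m Q0 + Delta in
  let Ah := adj Y *m A *m Y in
  let Bh := adj Y *m B *m Y in
  let Q1 := Y *m Xh in
  let E1 := Gp' *m E0 *m invmx (Gm + xi) in
  let F1 := Gm' *m F0 *m invmx (Gm + xi) + zeta *m invmx (Gm + xi) in
  let W1 := Xm + Xp' *m E1 + Xm' *m F1 in
  Ah *m Xh = Bh *m Xh *m diag_mx lamh ->
  adj Xh *m Bh *m Xh = 1%:M ->
  Gm + xi \in unitmx ->
  \rank Y = p ->
  exists (U1 : 'M[C]_p) (V1 : 'M[C]_(n, p - m)) (L1 : 'M[C]_m),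
    [/\ U1 \is unitarymx,
        L1 \in unitmx,
        adj L1 *m L1 = adj W1 *m B *m W1,
        specnorm L1 <= sqrtC (1 + (specnorm E1 + specnorm F1) ^+ 2) &
        Q1 = castmx (erefl n, subnKC Hmp) (row_mx (W1 *m invmx L1) V1) *m U1].
Proof.
move=> M gam Gm Gp' Gm' Xm Xp' Xm' Q0 Z xi zeta Y Ah Bh Q1 E1 F1 W1 hAh hXh Ku rY.
have Xu : X \in unitmx by case: (mulmx1_unit HXB).
have Bu : B \in unitmx by rewrite HB unitmx_mul adj_unit HCb.
have ME : M = X *m diag_mx lam *m invmx X.
  have MX : M *m X = X *m diag_mx lam.
    by rewrite /M -mulmxA HAX -!mulmxA mulKmx.
  by rewrite -MX mulmxK.
have rhoE := @rhoM_diag _ _ _ phi om X lam M Xu ME Hlam Hphi.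
have hmn : (m <= n)%N by apply: leq_trans Hmp (ltnW Hpn).
pose S0 : 'M[C]_(n, m) := sel n 0 m.
pose Sp : 'M[C]_(n, n - p) := sel n p (n - p).
pose Sm : 'M[C]_(n, n - m) := sel n m (n - m).
pose J : 'M[C]_(p, m) := sel p 0 m.
have XmE : Xm = X *m S0 by rewrite /Xm subblkE sel_id trmx1 mul1mx.
have XpE : Xp' = X *m Sp by rewrite /Xp' subblkE sel_id trmx1 mul1mx.
have XmE' : Xm' = X *m Sm by rewrite /Xm' subblkE sel_id trmx1 mul1mx.
have xiE : xi = S0^T *m Z *m J by rewrite /xi subblkE.
have zetaE : zeta = Sm^T *m Z *m J by rewrite /zeta subblkE.
have DS0 : diag_mx (\row_j rho phi om (lam 0 j)) *m S0 = S0 *m Gm by exact: diag_sel.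
have DSp : diag_mx (\row_j rho phi om (lam 0 j)) *m Sp = Sp *m Gp' by exact: diag_sel.
have DSm : diag_mx (\row_j rho phi om (lam 0 j)) *m Sm = Sm *m Gm' by exact: diag_sel.
pose e := invmx U0 *m castmx (subnKC Hmp, subnKC Hmp) (block_mx L0 0 0 1%:M) *m J.
have Q0e' : Q0 *m e = Xm + Xp' *m E0 + Xm' *m F0.
  by rewrite /Q0 /e !mulmxA mulmxK // Q0e mulmxKV.
have Ze : X *m (Z *m J) = Delta *m e.
  by rewrite /Z /e !mulmxA mulmxV // mul1mx.
have ZJ : Z *m J = S0 *m xi + Sm *m zeta.
  by rewrite xiE zetaE !mulmxA -!mulmxDl sel_split // mul1mx.
have W0E : Xm + Xp' *m E0 + Xm' *m F0 = X *m (S0 + Sp *m E0 + Sm *m F0).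
  by rewrite XmE XpE XmE' !mulmxDr !mulmxA.
have YeE : Y *m e = X *m (S0 *m (Gm + xi) + Sp *m (Gp' *m E0) + Sm *m (Gm' *m F0 + zeta)).
  rewrite /Y mulmxDl -(mulmxA _ Q0 e) Q0e' rhoE W0E -Ze.
  have -> : X *m diag_mx (\row_j rho phi om (lam 0 j)) *m invmx X *m (X *m (S0 + Sp *m E0 + Sm *m F0))
     = X *m (diag_mx (\row_j rho phi om (lam 0 j)) *m (S0 + Sp *m E0 + Sm *m F0)).
    by rewrite !mulmxA mulmxKV.
  rewrite -mulmxDr; congr (X *m _).
  rewrite ZJ !mulmxDr !mulmxA DS0 DSp DSm -!mulmxA.
  by rewrite -!addrA; congr (_ + _); rewrite [RHS]addrCA; congr (_ + _); exact: addrCA.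
have E1K : E1 *m (Gm + xi) = Gp' *m E0 by rewrite /E1 mulmxKV.
have F1K : F1 *m (Gm + xi) = Gm' *m F0 + zeta by rewrite /F1 mulmxDl !mulmxKV.
have W1E : W1 = X *m (S0 + Sp *m E1 + Sm *m F1).
  by rewrite /W1 XmE XpE XmE' !mulmxDr !mulmxA.
have YeW : Y *m e = W1 *m (Gm + xi).
  by rewrite YeE W1E -mulmxA !mulmxDl -!mulmxA mulVmx // mulmx1 F1K.
clearbody e.
have Xhu : Xh \in unitmx by case: (mulmx1_unit hXh).
pose c0 := invmx Xh *m e *m invmx (Gm + xi).
have W1Q : W1 = Q1 *m c0.
  by rewrite /Q1 /c0 !mulmxA mulmxK // YeW mulmxK.
have Q1orth : adj Q1 *m B *m Q1 = 1%:M by rewrite -hXh /Bh /Q1 adjM !mulmxA.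
clearbody c0.
pose C1 := S0 + Sp *m E1 + Sm *m F1.
pose R := adj c0.
pose Sr := schmidt R.
have Sru : Sr \is unitarymx := schmidt_unitarymx R Hmp.
pose T := R *m pinvmx Sr.
have RT : T *m Sr = R by exact: mulmxKpV (schmidt_sub R).
pose L1 := adj T.
have c0E : c0 = adj Sr *m L1 by rewrite /L1 -adjM RT /R adjK.
have SrSr : Sr *m adj Sr = 1%:M by exact: (unitarymxP Sru).
have Hc : adj W1 *m B *m W1 = adj c0 *m c0.
  have h : adj c0 *m (adj Q1 *m B *m Q1) *m c0 = adj c0 *m c0 by rewrite Q1orth mulmx1.
  by rewrite -h W1Q adjM !mulmxA.
have LL : adj L1 *m L1 = adj W1 *m B *m W1.
  by rewrite Hc c0E adjM adjK !mulmxA -(mulmxA (adj L1)) SrSr mulmx1.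
have HC1 : adj W1 *m B *m W1 = adj C1 *m C1.
  have h : adj C1 *m (adj X *m B *m X) *m C1 = adj C1 *m C1 by rewrite HXB mulmx1.
  have W1E' : W1 = X *m C1 := W1E.
  by rewrite -h W1E' adjM !mulmxA.
have S0C1 : S0^T *m C1 = 1%:M.
  rewrite /C1 !mulmxDr !mulmxA /S0 /Sp /Sm selTsel1 ?add0n //.
  by rewrite !selTsel0 ?add0n // !mul0mx !addr0.
have Hu : adj L1 *m L1 \in unitmx by rewrite LL HC1; exact: gram_unit S0C1.
have L1u : L1 \in unitmx by move: Hu; rewrite unitmx_mul => /andP[].
have [Sd Ku2] := @complete_unitary _ m p (p - m) Sr Sru (subnKC Hmp).
pose K2 := col_mx Sr Sd.
clearbody E1 F1.
exists (castmx (subnKC Hmp, erefl) K2), (Q1 *m adj Sd), L1; split.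
- exact: cast_unitary.
- exact: L1u.
- exact: LL.
- apply: specnorm_least.
    by rewrite sqrtC_ge0 addr_ge0 // ?ler01 // exprn_ge0 // addr_ge0 // specnorm_ge0.
  move=> x; rewrite sqrtCK.
  have -> : vnorm2 (L1 *m x) = vnorm2 (C1 *m x).
    rewrite !vnorm2E !trmx_mul !map_mxM -!mulmxA (mulmxA (L1^t*)) (mulmxA (C1^t*)).
    by change (L1^t* *m L1) with (adj L1 *m L1); rewrite LL HC1.
  have -> : C1 *m x = S0 *m x + (Sp *m (E1 *m x) + Sm *m (F1 *m x)).
    by rewrite /C1 !mulmxDl -addrA !mulmxA.
  rewrite vnorm2_orth; last first.
    rewrite trmx_mul map_mxM selC mulmxDr !mulmxA -!mulmxA !(mulmxA (S0^T)).
    by rewrite /S0 /Sp /Sm !selTsel0 ?add0n // !mul0mx !mulmx0 addr0.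
  rewrite vnorm2_sel ?add0n // mulrDl mul1r lerD2l.
  apply: vnorm2_add; rewrite ?specnorm_ge0 ?vnorm2_ge0 //.
    by rewrite vnorm2_sel ?subnKC ?(ltnW Hpn) //; exact: specnorm_ub.
  by rewrite vnorm2_sel ?subnKC //; exact: specnorm_ub.
- rewrite {1}(@cast_decomp _ n _ _ (subnKC Hmp) K2 Q1 Ku2).
  congr (castmx _ _ *m _).
  rewrite /K2 tr_col_mx map_row_mx mul_mx_row; congr row_mx.
  by rewrite W1Q c0E mulmxA mulmxK.
Qed.
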